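(* For any $F\in\mathscr{F}_1$ and $i\in[F]$: (i) $\mathcal{P}^2_{F,i}\supseteq\{0a,1b\}$ for some $a,b\in\mathcal{C}$; in particular $|\mathcal{P}^2_{F,i}|\ge2$. (ii) If $|\mathcal{P}^2_{F,i}|=2$, then (a) $|f_i(s)|\ge2$ for all $s\in\mathcal{S}$, and (b) $\mathcal{P}^2_{F,i}=\bar{\mathcal{P}}^2_{F,i}=\{0a,1b\}$ for some $a,b\in\mathcal{C}$. (iii) For any $s,s'\in\mathcal{S}$ with $s\ne s'$ and $f_i(s)=f_i(s')$, $|\mathcal{P}^2_{F,\tau_i(s)}|=|\mathcal{P}^2_{F,\tau_i(s')}|=2$. (iv) For any $s\in\mathcal{S}$, $|\mathcal{S}_{F,i}(f_i(s))|\le1$ if $\bar{\mathcal{P}}^0_{F,i}(f_i(s))\ne\emptyset$, and $|\mathcal{S}_{F,i}(f_i(s))|\le2$ if $\bar{\mathcal{P}}^0_{F,i}(f_i(s))=\emptyset$. (v) For any $s,s'\in\mathcal{S}$, $f_i(s')\ne f_i(s)0$ and $f_i(s')\ne f_i(s)1$. (vi) For any $s\in\mathcal{S}$, $|\bar{\mathcal{P}}^1_{F,i}(f_i(s)0)|\le1$ and $|\bar{\mathcal{P}}^1_{F,i}(f_i(s)1)|\le1$.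
   Context: $\mathcal{S}$ is a finite source alphabet with $|\mathcal{S}|\ge 2$ and $\mathcal{C}=\{0,1\}$; $\mathcal{A}^k,\mathcal{A}^{\ast},\mathcal{A}^{+}$ are sequences of length $k$, finite, positive finite length; $\lambda$ empty sequence; $\preceq$ prefix, $\prec$ proper prefix; $\mathrm{suff}(x_1\cdots x_n)=x_2\cdots x_n$. A code-tuple $F$ with $m\ge1$ code tables consists of maps $f_i:\mathcal{S}\to\mathcal{C}^{\ast}$ and $\tau_i:\mathcal{S}\to\{0,\dots,m-1\}$, $i\in[F]=\{0,\dots,m-1\}$. $f_i^{\ast}(\lambda)=\lambda$, $f_i^{\ast}(\pmb{x})=f_i(x_1)f^{\ast}_{\tau_i(x_1)}(\mathrm{suff}(\pmb{x}))$. $\mathcal{S}_{F,i}(\pmb{b})=\{s:f_i(s)=\pmb{b}\}$. For integer $k\ge0$, $\pmb{b}\in\mathcal{C}^{\ast}$: $\mathcal{P}^k_{F,i}(\pmb{b})$ is the set of $\pmb{c}\in\mathcal{C}^k$ such that some $\pmb{x}=x_1\cdots x_n\in\mathcal{S}^{+}$ has $f_i^{\ast}(\pmb{x})\succeq\pmb{b}\pmb{c}$ and $f_i(x_1)\succeq\pmb{b}$; $\bar{\mathcal{P}}^k_{F,i}(\pmb{b})$ the same with $f_i(x_1)\succ\pmb{b}$; $\mathcal{P}^k_{F,i}=\mathcal{P}^k_{F,i}(\lambda)$, $\bar{\mathcal{P}}^k_{F,i}=\bar{\mathcal{P}}^k_{F,i}(\lambda)$. $F\in\mathscr{F}_{2\text{-}\mathrm{dec}}$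 if $\mathcal{P}^2_{F,\tau_i(s)}\cap\bar{\mathcal{P}}^2_{F,i}(f_i(s))=\emptyset$ for all $i,s$, and $\mathcal{P}^2_{F,\tau_i(s)}\cap\mathcal{P}^2_{F,\tau_i(s')}=\emptyset$ whenever $s\ne s'$, $f_i(s)=f_i(s')$. Fix $\mu:\mathcal{S}\to(0,1]$ with $\sum_s\mu(s)=1$; $Q_{i,j}(F)=\sum_{s:\tau_i(s)=j}\mu(s)$; $F\in\mathscr{F}_{\mathrm{reg}}$ if $\pmb{\pi}Q(F)=\pmb{\pi}$, $\sum_i\pi_i=1$ has a unique solution. $\mathscr{F}_1=\{F\in\mathscr{F}_{\mathrm{reg}}\cap\mathscr{F}_{2\text{-}\mathrm{dec}}:\mathcal{P}^1_{F,i}=\{0,1\}\text{ for all }i\in[F]\}$. *)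

(* Defs.v *)
From HB Require Import structures.
From mathcomp Require Import all_boot all_order all_algebra.
From mathcomp Require Import boolp.
Set Implicit Arguments. Unset Strict Implicit. Unset Printing Implicit Defensive.
Import Order.TTheory GRing.Theory Num.Theory.

(* Code alphabet C = {0,1} is [bool] with 0 = false, 1 = true.
   A code-tuple with m code tables over source alphabet S. *)
Record code_tuple (S : finType) (m : nat) := CodeTuple {
  ct_f : 'I_m -> S -> seq bool;
  ct_tau : 'I_m -> S -> 'I_m }.

Section CodeTuple.
Variables (S : finType) (m : nat) (F : code_tuple S m).

Fixpoint fstar (i : 'I_m) (x : seq S) : seq bool :=
  match x with
  | [::] => [::]
  | a :: x' => ct_f F i a ++ fstar (ct_tau F i a) x'
  end.

Definition Pprop (i : 'I_m) (b c : seq bool) : Prop :=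
  exists x : seq S, exists x1 : S, exists xs : seq S,
    x = x1 :: xs /\ prefix (b ++ c) (fstar i x) /\ prefix b (ct_f F i x1).

Definition Pbarprop (i : 'I_m) (b c : seq bool) : Prop :=
  exists x : seq S, exists x1 : S, exists xs : seq S,
    x = x1 :: xs /\ prefix (b ++ c) (fstar i x) /\
    (prefix b (ct_f F i x1) && (b != ct_f F i x1)).

Definition Pset (k : nat) (i : 'I_m) (b : seq bool) : {set k.-tuple bool} :=
  [set c : k.-tuple bool | `[< Pprop i b c >]].

Definition Pbarset (k : nat) (i : 'I_m) (b : seq bool) : {set k.-tuple bool} :=
  [set c : k.-tuple bool | `[< Pbarprop i b c >]].

Definition Sset (i : 'I_m) (b : seq bool) : {set S} :=
  [set s | ct_f F i s == b].

Definition is_2dec : Prop :=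
  (forall (i : 'I_m) (s : S),
      Pset 2 (ct_tau F i s) [::] :&: Pbarset 2 i (ct_f F i s) = set0) /\
  (forall (i : 'I_m) (s s' : S), s != s' -> ct_f F i s = ct_f F i s' ->
      Pset 2 (ct_tau F i s) [::] :&: Pset 2 (ct_tau F i s') [::] = set0).

Local Open Scope ring_scope.
Definition Qmx (R : nzRingType) (mu : S -> R) : 'M[R]_m :=
  \matrix_(i < m, j < m) \sum_(s : S | ct_tau F i s == j) mu s.

Definition is_regular (R : nzRingType) (mu : S -> R) : Prop :=
  exists! pi : 'rV[R]_m, pi *m Qmx mu = pi /\ \sum_(i < m) pi 0 i = 1.

Definition in_F1 (R : nzRingType) (mu : S -> R) : Prop :=
  is_regular mu /\ is_2dec /\
  (forall i : 'I_m, Pset 1 i [::] = [set: 1.-tuple bool]).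

End CodeTuple.

(* Main.v *)
Require Import Defs.
From HB Require Import structures.
From mathcomp Require Import all_boot all_order all_algebra.
From mathcomp Require Import boolp reals.
From mathcomp Require Import zify.
Import Order.TTheory GRing.Theory Num.Theory.
Set Implicit Arguments. Unset Strict Implicit.

Fixpoint tauS (S : finType) m (F : code_tuple S m) (i : 'I_m) (x : seq S) : 'I_m :=
  match x with [::] => i | a :: x' => tauS F (ct_tau F i a) x' end.

Lemma fstar_cat S m (F : code_tuple S m) i x y :
  fstar F i (x ++ y) = fstar F i x ++ fstar F (tauS F i x) y.
Proof. elim: x i => [|a x IH] i //=. by rewrite IH catA. Qed.

Lemma memP S m (F : code_tuple S m) k j b (c : k.-tuple bool) :
  (c \in Pset F k j b) <-> Pprop F j b c.
Proof. rewrite inE; split => [/asboolP|?]; [done | exact/asboolP]. Qed.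

Lemma memPbar S m (F : code_tuple S m) k j b (c : k.-tuple bool) :
  (c \in Pbarset F k j b) <-> Pbarprop F j b c.
Proof. rewrite inE; split => [/asboolP|?]; [done | exact/asboolP]. Qed.

Section X.
Variables (S : finType) (m : nat) (F : code_tuple S m).
Hypothesis H1 : forall j, Pset F 1 j [::] = [set: 1.-tuple bool].

Lemma nonempty_word j : exists y, 0 < size (fstar F j y).
Proof.
have : [tuple false] \in Pset F 1 j [::] by rewrite H1 inE.
move/memP => [x [x1 [xs [-> [Hp _]]]]].
exists (x1 :: xs). move: Hp => /prefixP [r ->]. done.
Qed.

Lemma long_word n j : exists y, n <= size (fstar F j y).
Proof.
elim: n j => [|n IH] j; first by exists [::].
have [y Hy] := IH j.
have [z Hz] := nonempty_word (tauS F j y).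
exists (y ++ z). rewrite fstar_cat size_cat. lia.
Qed.

Lemma ext_pref j x1 xs p k : prefix p (fstar F j (x1 :: xs)) ->
  exists ys c, size c = k /\ prefix (p ++ c) (fstar F j (x1 :: ys)).
Proof.
move=> /prefixP [r Hr].
have [y Hy] := long_word (size p + k) (tauS F j (x1::xs)).
set q := r ++ fstar F (tauS F j (x1 :: xs)) y.
exists (xs ++ y), (take k q).
have E : fstar F j (x1 :: xs ++ y) = p ++ q.
  by rewrite -cat_cons fstar_cat Hr catA.
split.
  rewrite size_takel // /q size_cat. apply: leq_trans (leq_addl _ _) _. apply: leq_trans Hy _. exact: leq_addl.
rewrite E; apply/prefixP; exists (drop k q).
by rewrite -catA cat_take_drop.
Qed.

Lemma first_bit j d : exists e, Pprop F j [::] [:: d; e].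
Proof.
have : [tuple d] \in Pset F 1 j [::] by rewrite H1 inE.
move/memP => [x [x1 [xs [-> [Hp _]]]]].
have [ys [c [Hc Hp2]]] := ext_pref 1 Hp.
case: c Hc Hp2 => [|e [|]] // _ Hp2.
exists e, (x1 :: ys), x1, ys. split => //. split => //. exact: prefix0s.
Qed.

Lemma fstar_cons i s x : fstar F i (s :: x) = ct_f F i s ++ fstar F (ct_tau F i s) x.
Proof. by []. Qed.

Lemma inter0 (T : finType) (A B : {set T}) x : A :&: B = set0 -> x \in A -> x \in B -> False.
Proof. move=> H xa xb. have : x \in A :&: B by rewrite inE xa xb. by rewrite H inE. Qed.

Lemma P2_two j : exists a b, [tuple false; a] \in Pset F 2 j [::] /\ [tuple true; b] \in Pset F 2 j [::].
Proof.
have [a Ha] := first_bit j false. have [b Hb] := first_bit j true.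
by exists a, b; split; apply/memP.
Qed.

Lemma P2_card j : 2 <= #|Pset F 2 j [::]|.
Proof.
have [a [b [Ha Hb]]] := P2_two j.
apply: leq_trans (_ : 2 <= #|[set [tuple false; a]; [tuple true; b]]|) _; first by rewrite cards2.
apply: subset_leq_card; apply/subsetP => x; rewrite in_set2 => /orP[]/eqP-> //.
Qed.

Lemma disj_cover (A B : {set 2.-tuple bool}) : A :&: B = set0 -> 2 <= #|A| -> 2 <= #|B| ->
  (A :|: B = [set: 2.-tuple bool]) /\ #|A| = 2 /\ #|B| = 2.
Proof.
move=> H0 hA hB.
have U : #|A :|: B| = #|A| + #|B| by rewrite cardsU H0 cards0 subn0.
have M : #|A| + #|B| <= 4.
  rewrite -U. have := max_card (A :|: B). by rewrite card_tuple card_bool.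
split; last by split; lia.
apply/eqP; rewrite eqEcard subsetT /= cardsT card_tuple card_bool U. lia.
Qed.

Lemma sub_tau_empty i s : ct_f F i s = [::] -> Pset F 2 (ct_tau F i s) [::] \subset Pset F 2 i [::].
Proof.
move=> Hs; apply/subsetP => c /memP [x [x1 [xs [-> [Hp _]]]]].
apply/memP; exists (s :: x1 :: xs), s, (x1 :: xs); split => //; split; last exact: prefix0s.
by rewrite fstar_cons Hs cat0s.
Qed.

Lemma Pbar_P i b c : Pbarprop F i b c -> Pprop F i b c.
Proof. move=> [x [x1 [xs [E [Hp /andP[Hq _]]]]]]. by exists x, x1, xs. Qed.

Lemma three_le (A : {set 2.-tuple bool}) d z :
  [tuple d; false] \in A -> [tuple d; true] \in A -> [tuple ~~ d; z] \in A -> 3 <= #|A|.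
Proof.
move=> h1 h2 h3.
have : [tuple d; false] |: ([tuple d; true] |: [set [tuple ~~ d; z]]) \subset A.
  by apply/subsetP => x; rewrite !inE => /or3P[]/eqP->.
move/subset_leq_card; apply: leq_trans.
by case: d z h1 h2 h3 => [] [] _ _ _; rewrite !cardsU1 cards1 !inE.
Qed.

Hypothesis D1 : forall i s, Pset F 2 (ct_tau F i s) [::] :&: Pbarset F 2 i (ct_f F i s) = set0.
Hypothesis D2 : forall i s s', s != s' -> ct_f F i s = ct_f F i s' ->
  Pset F 2 (ct_tau F i s) [::] :&: Pset F 2 (ct_tau F i s') [::] = set0.
Hypothesis HS : 2 <= #|S|.

Lemma mk2 (c : seq bool) (Hc : size c = 2) : 2.-tuple bool.
Proof. exact: (@Tuple 2 bool c (introT eqP Hc)). Defined.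

Lemma eqP2 i s : #|Pset F 2 i [::]| = 2 -> ct_f F i s = [::] ->
  Pset F 2 (ct_tau F i s) [::] = Pset F 2 i [::].
Proof.
move=> Hc Hs; apply/eqP; rewrite eqEcard sub_tau_empty //= Hc. exact: P2_card.
Qed.

Lemma size_ge2 i : #|Pset F 2 i [::]| = 2 -> forall s, 2 <= size (ct_f F i s).
Proof.
move=> Hc s. case E: (ct_f F i s) => [|d [|d' w]] //.
- have Hbar : forall c, c \notin Pbarset F 2 i [::].
    move=> c; apply/negP => hc.
    apply: (inter0 (D1 i s) (x := c)); last by rewrite E.
    rewrite (eqP2 Hc E). apply/memP; apply: Pbar_P; exact/memPbar.
  have Hall : forall s'', ct_f F i s'' = [::].
    move=> s''; apply/eqP; apply/negPn/negP => hne.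
    have [ys [c [Hsz Hp]]] := ext_pref (j:=i) (x1:=s'') (xs:=[::]) (p:=[::]) 2 (prefix0s _).
    apply: (negP (Hbar (mk2 Hsz))); apply/memPbar.
    exists (s'' :: ys), s'', ys; split => //; split => //.
    by rewrite prefix0s eq_sym.
  have [s0 [s1 [_ _ ne]]] := card_gt1P HS.
  have := D2 ne (etrans (Hall s0) (esym (Hall s1))).
  rewrite (eqP2 Hc (Hall s0)) (eqP2 Hc (Hall s1)) setIid => H0.
  by move: Hc; rewrite H0 cards0.
- have [a [b [Ha Hb]]] := P2_two (ct_tau F i s).
  have lift : forall e e', Pprop F (ct_tau F i s) [::] [:: e; e'] -> Pprop F i [::] [:: d; e].
    move=> e e' [x [x1 [xs [-> [Hp _]]]]].
    exists (s :: x1 :: xs), s, (x1 :: xs); split => //; split; last exact: prefix0s.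
    rewrite fstar_cons E /= eqxx /=.
    apply: prefix_trans Hp. by rewrite /= eqxx.
  have [z Hz] := first_bit i (~~ d).
  have := three_le (d := d) (z := z) (A := Pset F 2 i [::]).
  rewrite Hc. apply; apply/memP => //.
  + by apply: (lift false a); apply/memP.
  + by apply: (lift true b); apply/memP.
Qed.

Lemma part2b i : #|Pset F 2 i [::]| = 2 ->
  exists a b : bool,
    Pset F 2 i [::] = [set [tuple false; a]; [tuple true; b]] /\
    Pbarset F 2 i [::] = [set [tuple false; a]; [tuple true; b]].
Proof.
move=> Hc; have [a [b [Ha Hb]]] := P2_two i.
have E : Pset F 2 i [::] = [set [tuple false; a]; [tuple true; b]].
  apply/esym/eqP; rewrite eqEcard Hc cards2 /= andbT.
  by apply/subsetP => x; rewrite in_set2 => /orP[]/eqP->.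
exists a, b; split => //; rewrite -E; apply/setP => c.
apply/idP/idP => /[dup] hc.
- by move/memPbar/Pbar_P/memP.
- move/memP => [x [x1 [xs [Ex [Hp _]]]]]; apply/memPbar.
  exists x, x1, xs; split => //; split => //; rewrite prefix0s /=.
  have := size_ge2 Hc x1. by case: (ct_f F i x1).
Qed.

Lemma part3 i s s' : s != s' -> ct_f F i s = ct_f F i s' ->
  #|Pset F 2 (ct_tau F i s) [::]| = 2 /\ #|Pset F 2 (ct_tau F i s') [::]| = 2.
Proof.
move=> ne E; have [_ []] := disj_cover (D2 ne E) (P2_card _) (P2_card _); by split.
Qed.

Lemma mem_cover i s s' (c : 2.-tuple bool) : s != s' -> ct_f F i s = ct_f F i s' ->
  c \in Pset F 2 (ct_tau F i s) [::] \/ c \in Pset F 2 (ct_tau F i s') [::].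
Proof.
move=> ne E; have [U _] := disj_cover (D2 ne E) (P2_card _) (P2_card _).
have : c \in [set: 2.-tuple bool] by rewrite inE.
by rewrite -U inE => /orP.
Qed.

Lemma part4a i s : Pbarset F 0 i (ct_f F i s) != set0 -> #|Sset F i (ct_f F i s)| <= 1.
Proof.
move=> /set0Pn [t /memPbar [x [x1 [xs [Ex [Hp /andP [Hq Hne]]]]]]].
rewrite leqNgt; apply/negP => /card_gt1P [s1 [s2 [h1 h2 ne]]].
move: h1 h2; rewrite !inE => /eqP e1 /eqP e2.
have Hp' : prefix (ct_f F i s) (fstar F i (x1 :: xs)).
  by rewrite fstar_cons; apply: prefix_catl.
have [ys [c [Hsz Hpc]]] := ext_pref 2 Hp'.
have Hbar : mk2 Hsz \in Pbarset F 2 i (ct_f F i s).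
  apply/memPbar; exists (x1 :: ys), x1, ys; split => //; split => //.
  by rewrite Hq.
have [h|h] := mem_cover (mk2 Hsz) ne (etrans e1 (esym e2)).
- by apply: (inter0 (D1 i s1) h); rewrite e1.
- by apply: (inter0 (D1 i s2) h); rewrite e2.
Qed.

Lemma part4b i b : #|Sset F i b| <= 2.
Proof.
rewrite leqNgt; apply/negP => H3.
have /card_gt0P [s1 h1] : 0 < #|Sset F i b| by apply: leq_trans H3.
have : 1 < #|Sset F i b :\ s1|.
  by move: H3; rewrite (cardsD1 s1) h1.
move=> /card_gt1P [s2 [s3 [h2 h3 ne]]].
move: h1 h2 h3; rewrite !inE => /eqP e1 /andP [n2 /eqP e2] /andP [n3 /eqP e3].
have /card_gt0P [t ht] : 0 < #|Pset F 2 (ct_tau F i s3) [::]| by apply: leq_trans (P2_card _).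
have n12 : s1 != s2 by rewrite eq_sym.
have [h|h] := mem_cover t n12 (etrans e1 (esym e2)).
- by apply: (inter0 (D2 n3 (etrans e3 (esym e1))) ht h).
- by apply: (inter0 (D2 ne (etrans e2 (esym e3))) h ht).
Qed.

Lemma no_both i s d : Pbarprop F i (ct_f F i s) [:: d; false] ->
  Pbarprop F i (ct_f F i s) [:: d; true] -> False.
Proof.
move=> hf ht; have [e He] := first_bit (ct_tau F i s) d.
apply: (inter0 (D1 i s) (x := [tuple d; e])); first exact/memP.
by apply/memPbar; case: e He.
Qed.

Lemma part5 i s s' d : ct_f F i s' != rcons (ct_f F i s) d.
Proof.
apply/negP => /eqP E.
have H : forall e, Pbarprop F i (ct_f F i s) [:: d; e].
  move=> e; have [e' [x [x1 [xs [-> [Hp _]]]]]] := first_bit (ct_tau F i s') e.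
  exists (s' :: x1 :: xs), s', (x1 :: xs); split => //; split.
    rewrite fstar_cons E -cats1 -catA /= prefix_catr // eqxx /= eqxx /=.
    apply: prefix_trans Hp; by rewrite /= eqxx.
  rewrite E prefix_rcons /=; apply/eqP => /(congr1 size).
  rewrite size_rcons; lia.
exact: (no_both (H false) (H true)).
Qed.

Lemma bar_shift i b d e : Pbarprop F i (rcons b d) [:: e] -> Pbarprop F i b [:: d; e].
Proof.
move=> [x [x1 [xs [Ex [Hp /andP [Hq Hne]]]]]].
exists x, x1, xs; split => //; split; first by rewrite -cat_rcons.
rewrite (prefix_trans (prefix_rcons b d) Hq) /=.
apply/eqP => Eb; move: Hq; rewrite -Eb => /size_prefix; rewrite size_rcons; lia.
Qed.

Lemma part6 i s d : #|Pbarset F 1 i (rcons (ct_f F i s) d)| <= 1.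
Proof.
rewrite leqNgt; apply/negP => /card_gt1P [t1 [t2 [h1 h2 ne]]].
move: t1 t2 h1 h2 ne => [[|e1 [|]] //= p1] [[|e2 [|]] //= p2].
move=> /memPbar /= /bar_shift h1 /memPbar /= /bar_shift h2.
rewrite -val_eqE /= eqseq_cons andbT.
by case: e1 e2 h1 h2 => [] [] // h1 h2 _; [apply: (no_both h2 h1) | apply: (no_both h1 h2)].
Qed.
End X.

Unset Implicit Arguments. Set Strict Implicit.

Theorem lemma14 (R : realType) (S : finType) (mu : S -> R)
  (hS : (2 <= #|S|)%N)
  (hmu_pos : forall s, (0 < mu s)%R /\ (mu s <= 1)%R)
  (hmu_sum : (\sum_(s : S) mu s)%R = 1%R)
  (m : nat) (hm : (1 <= m)%N) (F : code_tuple S m)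
  (hF : in_F1 F mu) (i : 'I_m) :
  (* (i) *)
  ((exists a b : bool,
      [tuple false; a] \in Pset F 2 i [::] /\ [tuple true; b] \in Pset F 2 i [::])
   /\ (2 <= #|Pset F 2 i [::]|)%N)
  (* (ii) *)
  /\ (#|Pset F 2 i [::]| = 2 ->
        (forall s : S, (2 <= size (ct_f F i s))%N) /\
        (exists a b : bool,
           Pset F 2 i [::] = [set [tuple false; a]; [tuple true; b]] /\
           Pbarset F 2 i [::] = [set [tuple false; a]; [tuple true; b]]))
  (* (iii) *)
  /\ (forall s s' : S, s != s' -> ct_f F i s = ct_f F i s' ->
        #|Pset F 2 (ct_tau F i s) [::]| = 2 /\ #|Pset F 2 (ct_tau F i s') [::]| = 2)
  (* (iv) *)
  /\ (forall s : S,
        (Pbarset F 0 i (ct_f F i s) != set0 -> (#|Sset F i (ct_f F i s)| <= 1)%N) /\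
        (Pbarset F 0 i (ct_f F i s) = set0 -> (#|Sset F i (ct_f F i s)| <= 2)%N))
  (* (v) *)
  /\ (forall s s' : S,
        ct_f F i s' != rcons (ct_f F i s) false /\ ct_f F i s' != rcons (ct_f F i s) true)
  (* (vi) *)
  /\ (forall s : S,
        (#|Pbarset F 1 i (rcons (ct_f F i s) false)| <= 1)%N /\
        (#|Pbarset F 1 i (rcons (ct_f F i s) true)| <= 1)%N).
Proof.
move: hF => [_ [[D1 D2] H1]].
split.
  split; [exact: P2_two | exact: P2_card].
split.
  move=> Hc; split; [exact: size_ge2 | exact: part2b].
split.
  move=> s s' ne E; exact: part3.
split.
  move=> s; split; [exact: part4a | by move=> _; exact: part4b].
split.
  move=> s s'; split; exact: part5.
move=> s; split; exact: part6.
Qed.
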